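(* Let $p$ be a prime and let $k,N$ be positive integers. For any positive integer $n\geq N$, \[ \sum_{i=0}^{\varphi(p^N)-1}B^{(-k)}_{n+i}\equiv \sum_{i=0}^{\varphi(p^N)-1}B^{(-n-i)}_{k}\equiv 0\pmod{p^N}. \]
   Context: For any integer $k$, let $\mathrm{Li}_k(t)=\sum_{n=1}^{\infty} t^n/n^k$. The poly-Bernoulli numbers $B^{(k)}_n$ ($n\ge 0$) are defined by $\frac{\mathrm{Li}_k(1-e^{-t})}{1-e^{-t}}=\sum_{n=0}^{\infty}B^{(k)}_n\frac{t^n}{n!}$. For negative upper index these are integers. $\varphi$ denotes Euler's totient function, so $\varphi(p^N)=p^{N-1}(p-1)$. *)

(* Defs.v *)
From HB Require Import structures.
From mathcomp Require Import all_boot all_order all_algebra.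
Set Implicit Arguments. Unset Strict Implicit. Unset Printing Implicit Defensive.
Import Order.TTheory GRing.Theory Num.Theory.
Local Open Scope ring_scope.

(* Truncation of e^{-t} = \sum_j (-1)^j t^j / j! to degree <= n, as a polynomial over rat. *)
Definition expm_trunc (n : nat) : {poly rat} :=
  \poly_(j < n.+1) ((-1) ^+ j / (j`!)%:R).

(* Poly-Bernoulli number with negative upper index: polyBern_neg k n = B_n^{(-k)}.
   Generating function: Li_{-k}(x)/x = \sum_{m>=0} (m+1)^k x^m with x = 1 - e^{-t}.
   Since x has no constant term, the coefficient of t^n only involves m <= n and
   the terms of e^{-t} of degree <= n; so
     B_n^{(-k)} = n! * [t^n] \sum_{m=0}^{n} (m+1)^k (1 - e^{-t})^m
   computed exactly with the truncation above. *)
Definition polyBern_neg (k n : nat) : rat :=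
  (n`!)%:R * (\sum_(m < n.+1) ((m.+1)%:R ^+ k) *: (1 - expm_trunc n) ^+ m)`_n.

(* Main.v *)
Require Import Defs.
From HB Require Import structures.
From mathcomp Require Import all_boot all_order all_algebra.
From mathcomp Require Import cyclic.
From mathcomp Require Import zify ring lra.
Import Order.TTheory GRing.Theory Num.Theory.
Local Open Scope ring_scope.

Definition X (m n : nat) : int :=
  \sum_(0 <= l < m.+1) (-1) ^+ l * ('C(m, l))%:R * (- (l%:R)) ^+ n.

Lemma sum_widen (F : nat -> int) a b : (a <= b)%N ->
  (forall i, (a <= i < b)%N -> F i = 0) ->
  \sum_(0 <= i < a) F i = \sum_(0 <= i < b) F i.
Proof.
move=> hab H; rewrite [RHS](big_cat_nat (n:=a)) //=.
rewrite [X in _ + X]big1_seq ?addr0 // => i /andP[_]; rewrite mem_index_iota.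
exact: H.
Qed.

Lemma X_m0 m : X m 0 = (m == 0%N)%:R.
Proof.
rewrite /X.
under eq_bigr do rewrite expr0 mulr1.
have := exprD1n (-1 : int) m; rewrite addNr expr0n => ->.
rewrite big_mkord; apply: eq_bigr => i _; by rewrite mulr_natr.
Qed.

Lemma X_0S n : X 0 n.+1 = 0.
Proof. by rewrite /X big_nat1 oppr0 expr0n /= mulr0. Qed.

Lemma X_SS m n : X m.+1 n.+1 = m.+1%:R * (X m n - X m.+1 n).
Proof.
rewrite /X [in RHS](@sum_widen _ m.+1 m.+2) // => [|i /andP[hi _]]; last first.
  by rewrite bin_small // mulr0 mul0r.
rewrite -sumrB mulr_sumr.
rewrite big_nat_recl // [in RHS]big_nat_recl //.
rewrite oppr0 expr0n /= mulr0 add0r !bin0 subrr mulr0 add0r.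
apply: eq_bigr => i _.
have h := mul_bin_diag m.+1 i; rewrite /= binS in h.
have h' : ((i.+1)%:R * ('C(m, i.+1) + 'C(m, i))%:R = (m.+1)%:R * ('C(m, i))%:R :> int).
  by rewrite -!natrM h mulnC.
rewrite binS [(- _)^+n.+1]exprS.
transitivity (- ((-1)^+i.+1 * (- (i.+1)%:R)^+n) * ((i.+1)%:R * ('C(m,i.+1) + 'C(m,i))%:R) :> int); last first.
  by rewrite h' natrD; move: ((-1)^+i.+1) ((- (i.+1)%:R)^+n) => s y; ring.
rewrite natrD; move: ((-1)^+i.+1) ((- (i.+1)%:R)^+n) => s y; ring.
Qed.

Lemma X_vanish n m : (n < m)%N -> X m n = 0.
Proof.
elim: n m => [|n IH] [|m] //= hm.
  by rewrite X_m0.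
by rewrite X_SS !IH ?subrr ?mulr0 // ltnW.
Qed.

Lemma X_fact n m : ((m`!)%:R %| X m n)%Z.
Proof.
elim: n m => [|n IH] [|m].
- by rewrite X_m0 dvdz1.
- by rewrite X_m0 dvdz0.
- by rewrite X_0S dvdz0.
rewrite X_SS factS natrM; apply: dvdz_mul => //.
apply: rpredB; first exact: IH.
apply: dvdz_trans (IH m.+1); rewrite factS natrM; exact: dvdz_mull.
Qed.

Fixpoint Ep (n j : nat) : int :=
  if n is n'.+1 then (j.+1)%:R * Ep n' j + j%:R * Ep n' j.-1 else (j == 0%N)%:R.

Lemma Ep_vanish n j : (n < j)%N -> Ep n j = 0.
Proof.
elim: n j => [|n IH] [|j] //= hj.
by rewrite !IH ?mulr0 ?addr0 // ltnW.
Qed.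

Lemma I1 k m : (m.+1)%:R ^+ k = \sum_(0 <= j < m.+1) ('C(m, j))%:R * Ep k j :> int.
Proof.
elim: k => [|k IH].
  rewrite big_nat_recl //= bin0 mulr1 expr0 big1 ?addr0 // => j _.
  by rewrite mulr0.
rewrite exprS IH mulr_sumr /=.
symmetry.
under eq_bigr do rewrite mulrDr.
rewrite big_split /= [X in _ + X]big_nat_recl // mul0r mulr0 add0r.
rewrite [X in _ + X](@sum_widen (fun i => 'C(m, i.+1)%:R * (i.+1%:R * Ep k i)) m m.+1) //; last first.
  by move=> i /andP[hi _]; rewrite bin_small ?mul0r // ltnS.
rewrite -big_split /=; apply: eq_bigr => j _.
have h := mul_bin_diag m.+1 j; rewrite /= binS in h.
have h' : ((j.+1)%:R * ('C(m, j.+1) + 'C(m, j))%:R = (m.+1)%:R * ('C(m, j))%:R :> int).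
  by rewrite -!natrM h mulnC.
transitivity (((j.+1)%:R * ('C(m, j.+1) + 'C(m, j))%:R) * Ep k j); last by rewrite h'; ring.
by rewrite natrD; ring.
Qed.

Definition A (n j : nat) : int := \sum_(0 <= m < n.+1) ('C(m, j))%:R * X m n.

Lemma I2 n j : A n j = Ep n j.
Proof.
elim: n j => [|n IH] j.
  by rewrite /A big_nat1 X_m0 mulr1 /=; case: j.
rewrite /= -!IH /A big_nat_recl // X_0S mulr0 add0r.
under eq_bigr do rewrite X_SS.
transitivity (\sum_(0 <= i < n.+1) ('C(i.+1, j))%:R * (i.+1)%:R * X i n
  - \sum_(0 <= i < n.+1) ('C(i.+1, j))%:R * (i.+1)%:R * X i.+1 n).
  by rewrite -sumrB; apply: eq_bigr => i _; ring.
have -> : \sum_(0 <= i < n.+1) ('C(i.+1, j))%:R * (i.+1)%:R * X i.+1 n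
   = \sum_(0 <= i < n.+1) ('C(i, j))%:R * i%:R * X i n.
  rewrite [RHS](@sum_widen _ n.+1 n.+2) // => [|i /andP[hi hi2]]; last first.
    have -> : i = n.+1 by lia.
    by rewrite X_vanish ?mulr0.
  rewrite [RHS]big_nat_recl // [X in _ = X + _](_ : _ = 0) ?add0r //.
  by rewrite mulr0 mul0r.
rewrite -sumrB !mulr_sumr -big_split /=; apply: eq_bigr => i _.
case: j => [|j].
  by rewrite !bin0 mul0r addr0; ring.
rewrite binS /=.
have h := mul_bin_diag i.+1 j; rewrite /= binS in h.
have h' : ((j.+1)%:R * ('C(i, j.+1) + 'C(i, j))%:R = (i.+1)%:R * ('C(i, j))%:R :> int).
  by rewrite -!natrM h mulnC.
rewrite !natrD; move: h'; rewrite natrD => h'.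
move: ('C(i, j.+1))%:R ('C(i, j))%:R h' => a b h'.
transitivity ((a + (i.+1)%:R * b) * X i n); first ring.
rewrite -h'; ring.
Qed.

Definition PBZ (k n : nat) : int := \sum_(0 <= m < n.+1) (m.+1)%:R ^+ k * X m n.

Lemma PBZ_Ep k n : PBZ k n = \sum_(0 <= j < n.+1) Ep k j * Ep n j.
Proof.
rewrite /PBZ.
rewrite (eq_big_nat _ _ (F2 := fun m => \sum_(0 <= j < n.+1) ('C(m, j))%:R * Ep k j * X m n)); last first.
  move=> m /andP[_ hm]; rewrite I1 mulr_suml.
  rewrite (@sum_widen (fun j => 'C(m, j)%:R * Ep k j * X m n) m.+1 n.+1) //.
  by move=> j /andP[hj _]; rewrite bin_small // mul0r mul0r.
rewrite exchange_big /=; apply: eq_bigr => j _.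
rewrite -(I2 n j) /A mulr_sumr; apply: eq_bigr => m _; ring.
Qed.

Lemma PBZ_sym k n : PBZ k n = PBZ n k.
Proof.
rewrite !PBZ_Ep.
rewrite (@sum_widen (fun j => Ep k j * Ep n j) n.+1 (n + k).+1); last 2 first.
- by rewrite ltnS leq_addr.
- by move=> j /andP[hj _]; rewrite (@Ep_vanish n j hj) mulr0.
rewrite (@sum_widen (fun j => Ep n j * Ep k j) k.+1 (n + k).+1); last 2 first.
- by rewrite ltnS leq_addl.
- by move=> j /andP[hj _]; rewrite (@Ep_vanish k j hj) mulr0.
by apply: eq_bigr => j _; rewrite mulrC.
Qed.

Lemma Epow n l a : (a <= n)%N ->
  (a`!)%:R * ((expm_trunc n) ^+ l)`_a = (- (l%:R)) ^+ a :> rat.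
Proof.
elim: l a => [|l IH] a ha.
  rewrite expr0 coef1; case: a ha => [|a] _ /=.
    by rewrite mulr1 expr0.
  by rewrite mulr0 oppr0 expr0n.
rewrite exprSr coefM mulr_sumr.
rewrite (_ : - (l.+1)%:R = -1 + - l%:R); last by rewrite -nat1r opprD.
rewrite exprDn; apply: eq_bigr => [[j hj]] _ /=.
have hj' : (j <= a)%N by rewrite -ltnS.
have hE : (expm_trunc n)`_(a - j) = (-1) ^+ (a - j) / ((a - j)`!)%:R.
  rewrite /expm_trunc coef_poly ifT //.
  by rewrite ltnS (leq_trans (leq_subr _ _) ha).
rewrite hE -(bin_fact hj') !natrM -(IH j (leq_trans hj' ha)) -[in RHS]mulr_natr.
have hf : ((a - j)`!)%:R != 0 :> rat by rewrite pnatr_eq0 -lt0n fact_gt0.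
move: ((a - j)`!)%:R hf => f hf.
move: ((-1) ^+ (a - j)) ((expm_trunc n ^+ l)`_j) => s e.
by field.
Qed.

Lemma coef_pow_sub m n :
  (n`!)%:R * ((1 - expm_trunc n) ^+ m)`_n = (X m n)%:~R :> rat.
Proof.
rewrite addrC -scaleN1r exprD1n coef_sum mulr_sumr /X rmorph_sum big_mkord.
apply: eq_bigr => [[l hl]] _ /=.
rewrite coefMn exprZn coefZ -[_ *+ 'C(m, l)]mulr_natr.
rewrite !rmorphM /= !rmorphXn /= !rmorphN /= rmorph1 !rmorph_nat.
rewrite -(@Epow n l n (leqnn n)).
move: ((-1) ^+ l) ((expm_trunc n ^+ l)`_n) => s e.
ring.
Qed.

Lemma PB_PBZ k n : polyBern_neg k n = (PBZ k n)%:~R.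
Proof.
rewrite /polyBern_neg coef_sum mulr_sumr /PBZ rmorph_sum big_mkord.
apply: eq_bigr => [[m hm]] _ /=.
by rewrite coefZ mulrCA coef_pow_sub rmorphM /= rmorphXn /= rmorph_nat.
Qed.

Lemma geom_split x a b :
  (\sum_(i < b * a) x ^ i = (\sum_(i < b) x ^ i) * \sum_(j < a) x ^ (b * j))%N.
Proof.
elim: a => [|a IH]; first by rewrite muln0 !big_ord0 muln0.
rewrite mulnS addnC big_split_ord /= IH big_ord_recr /= mulnDr.
congr (_ + _).
rewrite big_distrl /=; apply: eq_bigr => i _.
by rewrite /= expnD mulnC.
Qed.

Lemma geom_p p x e : prime p -> x = 1 %[mod p] ->
  (p ^ e %| \sum_(i < p ^ e) x ^ i)%N.
Proof.
move=> pp hx; elim: e => [|e IH]; first by rewrite expn0 dvd1n.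
rewrite expnSr geom_split dvdn_mul //.
rewrite /dvdn -modn_summ.
rewrite (eq_bigr (fun _ => (1 %% p)%N)) => [|i _]; last by rewrite -modnXm hx modnXm exp1n.
rewrite sum_nat_const card_ord.
by rewrite -modnMml modnn mul0n mod0n.
Qed.

Lemma term_div p N n k m : prime p -> (0 < k)%N -> (0 < N)%N -> (N <= n)%N ->
  ((p ^ N)%N%:Z %| X m k * (\sum_(i < totient (p ^ N)) (m.+1 ^ (n + i))%N)%N%:Z)%Z.
Proof.
move=> pp k0 N0 Nn.
case: m => [|m].
  by case: k k0 => // k _; rewrite X_0S mul0r dvdz0.
set G := (\sum_(i < totient (p ^ N)) (m.+2 ^ (n + i))%N)%N.
have GE : G = (m.+2 ^ n * \sum_(i < totient (p ^ N)) m.+2 ^ i)%N.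
  by rewrite /G big_distrr /=; apply: eq_bigr => i _; rewrite expnD.
have p0 : (0 < p)%N by exact: prime_gt0.
case: (boolP (p %| m.+1)%N) => hpm.
  have h1 : (p%:Z %| X m.+1 k)%Z.
    apply: dvdz_trans (X_fact k m.+1).
    by rewrite natz dvdzE /= dvdn_fact // p0 dvdn_leq.
  have h2 : (p ^ N.-1 %| G)%N.
    rewrite GE dvdn_mull // totient_pfactor // mulnC geom_split dvdn_mulr //.
    apply: geom_p => //.
    by apply/eqP; rewrite eqn_mod_dvd // subn1.
  have -> : (p ^ N)%N%:Z = p%:Z * (p ^ N.-1)%N%:Z.
    by rewrite -PoszM -expnS prednK.
  have h2' : ((p ^ N.-1)%N%:Z %| G%:Z)%Z by rewrite dvdzE.
  have := dvdz_mul h1 h2'.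
  by [].
case: (boolP (p %| m.+2)%N) => hpm2.
  apply: dvdz_mull; rewrite dvdzE /= /G.
  apply: dvdn_sum => i _.
  apply: dvdn_trans (dvdn_exp2r N hpm2) _.
  by apply: dvdn_exp2l; rewrite (leq_trans Nn) // leq_addr.
apply: dvdz_mull; rewrite dvdzE /= GE dvdn_mull //.
have cop : coprime (p ^ N) m.+1 by apply: coprimeXl; rewrite prime_coprime.
rewrite -(Gauss_dvdr _ cop) -[m.+1]/(m.+2.-1) -predn_exp.
have cop2 : coprime m.+2 (p ^ N) by rewrite coprime_sym; apply: coprimeXl; rewrite prime_coprime.
have := Euler_exp_totient cop2.
move/eqP; rewrite eqn_mod_dvd ?expn_gt0 // subn1.
by apply.
Qed.

Lemma sum_div p N n k : prime p -> (0 < k)%N -> (0 < N)%N -> (N <= n)%N ->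
  ((p ^ N)%N%:Z %| \sum_(i < totient (p ^ N)) PBZ (n + i) k)%Z.
Proof.
move=> pp k0 N0 Nn.
rewrite /PBZ exchange_big /=.
apply: rpred_sum => m _.
have -> : \sum_(i < totient (p ^ N)) (m.+1)%:R ^+ (n + i) * X m k
    = X m k * (\sum_(i < totient (p ^ N)) (m.+1 ^ (n + i))%N)%N%:R.
  by rewrite natr_sum mulr_sumr; apply: eq_bigr => i _; rewrite natrX mulrC.
rewrite natz; exact: term_div.
Qed.

Theorem theorem3p6 (p k N n : nat) :
  prime p -> (0 < k)%N -> (0 < N)%N -> (N <= n)%N ->
  (exists z : int,
      \sum_(i < totient (p ^ N)) polyBern_neg k (n + i) = z%:~R * (p ^ N)%:R) /\
  (exists z : int,
      \sum_(i < totient (p ^ N)) polyBern_neg (n + i) k = z%:~R * (p ^ N)%:R).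
Proof.
move=> pp k0 N0 Nn.
have [z hz] : exists z : int,
    \sum_(i < totient (p ^ N)) PBZ (n + i) k = z * (p ^ N)%N%:Z.
  by apply/dvdzP; exact: sum_div.
have cast : (\sum_(i < totient (p ^ N)) PBZ (n + i) k)%:~R = z%:~R * (p ^ N)%:R :> rat.
  by rewrite hz rmorphM.
split; exists z; rewrite -cast rmorph_sum; apply: eq_bigr => i _.
  by rewrite PB_PBZ PBZ_sym.
by rewrite PB_PBZ.
Qed.
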